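(* Let $i,j,k$ be distinct jobs such that $(i,k)$ and $(j,k)$ are red pairs. Then $D^*(i,j)\ge t_k$ and, in the schedule produced by $1$-SORT, $D(i,j)\le\left(1+\frac{1}{\mu\nu}\right)D^*(i,j)$.
   Context: Setting: single machine, jobs $J=\{1,\dots,n\}$, each job $j$ with test time $t_j\ge0$ and processing time $p_j\ge0$ (revealed only when the test is executed); each job's test must be executed before its processing part, which may start any time after the test; operations are non-preemptive and the machine does one at a time. $\sigma_j=t_j+p_j$, $m_j=\max\{t_j,p_j\}$. Standing assumption (general position): no two of the $3n$ numbers $t_j,p_j,\sigma_j$ are equal. Algorithm $1$-SORT: keep a priority queue of available operations, initially the test of every job $j$ with priority $t_j$; repeatedly remove a minimum-priority operation and execute it immediately; after executing the test of $j$, insert the processing part of $j$ with priority $p_j$. For distinct jobs $j,k$, let $d_{k,j}$ be the total amount of time during which operations of $k$ are executed before the completion time of $j$, and $D(j,k)=d_{j,k}+d_{k,j}$, evaluated for the $1$-SORT schedule; $D^*(j,k)=\min\{\sigma_j,\sigma_k\}$. Fix constants $\mu>1$ and $0<\nu<1$ with $\mu\nu>1$ and $1+\frac1\mu\le\nu+\nu^2$. A job $j$ is imbalanced if $m_j\ge\mu\min\{t_j,p_j\}$. For distinct jobs $j,k$, the ordered pair $(j,k)$ is a red pair if $j$ is imbalanced, $m_j\ge t_k\ge\nu m_j$, and $p_k\ge\nu t_k$. *)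

(* Defs.v *)
From mathcomp Require Import all_boot all_order all_algebra.
Set Implicit Arguments. Unset Strict Implicit. Unset Printing Implicit Defensive.
Import Order.TTheory GRing.Theory Num.Theory.
Local Open Scope ring_scope.

Section Sched.
Variables (R : realFieldType) (n : nat) (t p : 'I_n -> R).

(* operation: (j, true) = test of j, (j, false) = processing part of j *)
Definition op := ('I_n * bool)%type.

Definition dur (o : op) : R := if o.2 then t o.1 else p o.1.
Definition prio (o : op) : R := dur o.

Definition pick_min (q0 : op) (Q : seq op) : op :=
  foldl (fun a b => if prio b < prio a then b else a) q0 Q.

(* literal simulation of 1-SORT: remove a min-priority operation, execute it,
   and if it is a test of j, insert the processing part of j *)
Fixpoint run (fuel : nat) (Q : seq op) : seq op :=
  match fuel with
  | 0%N => [::]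
  | f.+1 =>
    match Q with
    | [::] => [::]
    | q0 :: _ =>
      let o := pick_min q0 Q in
      let Q' := rem o Q in
      let Q'' := if o.2 then rcons Q' (o.1, false) else Q' in
      o :: run f Q''
    end
  end.

(* the sequence of operations executed by 1-SORT (2n steps suffice) *)
Definition sort1 : seq op := run (2 * n) [seq (j, true) | j <- enum 'I_n].

Definition start (i : nat) : R := \sum_(o <- take i sort1) dur o.

(* completion time of job j = completion of its processing part *)
Definition compl (j : 'I_n) : R := start (index (j, false) sort1).+1.

(* d_{k,j}: total time during which operations of k are executed before C_j *)
Definition dd (k j : 'I_n) : R :=
  \sum_(i < size sort1 | (nth (k, true) sort1 i).1 == k)
     Num.max 0 (Num.min (start i.+1) (compl j) - start i).

Definition DD (j k : 'I_n) : R := dd j k + dd k j.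

Definition sigma (j : 'I_n) : R := t j + p j.
Definition mm (j : 'I_n) : R := Num.max (t j) (p j).
Definition Dstar (j k : 'I_n) : R := Num.min (sigma j) (sigma k).

(* the 3n numbers t_j, p_j, sigma_j are pairwise distinct *)
Definition numval (a : 'I_3) (j : 'I_n) : R :=
  match val a with 0%N => t j | 1%N => p j | _ => sigma j end.
Definition general_position : Prop :=
  forall (a b : 'I_3) (j k : 'I_n), (a, j) != (b, k) -> numval a j != numval b k.

Definition imbalanced (mu : R) (j : 'I_n) : Prop :=
  mu * Num.min (t j) (p j) <= mm j.

Definition red_pair (mu nu : R) (j k : 'I_n) : Prop :=
  [/\ j != k, imbalanced mu j, nu * mm j <= t k, t k <= mm j & nu * t k <= p k].

End Sched.

(* Main.v *)
Require Import Defs.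
From mathcomp Require Import all_boot all_order all_algebra.
From mathcomp Require Import lra zify.
Set Warnings "-notation-overridden,-ambiguous-paths".
Import Order.TTheory GRing.Theory Num.Theory.
Local Open Scope ring_scope.

Section S.
Variables (R : realFieldType) (n : nat) (t p : 'I_n -> R).

Lemma keyr {mu nu x y : R} : 1 < mu * nu -> mu * nu * x <= y -> x <= (mu*nu)^-1 * y.
Proof.
move=> h1 h2; have h0 : 0 < mu * nu by lra.
by rewrite ler_pdivlMl.
Qed.

Lemma arith (tf pf ts ps tk mu nu D : R) :
  1 < mu -> 0 < nu -> nu < 1 -> 1 < mu * nu ->
  0 <= tf -> 0 <= pf -> 0 <= ts -> 0 <= ps ->
  mu * Num.min tf pf <= Num.max tf pf -> mu * Num.min ts ps <= Num.max ts ps ->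
  nu * Num.max tf pf <= tk -> tk <= Num.max tf pf ->
  nu * Num.max ts ps <= tk -> tk <= Num.max ts ps ->
  ((D = tf + pf /\ tf <= ts /\ pf <= ts) \/
   (D = tf + pf + ts /\ pf <= ps /\ ((ts <= tf /\ tf <= ps) \/ (tf <= ts /\ ts <= pf)))) ->
  D <= (1 + (mu*nu)^-1) * Num.min (tf + pf) (ts + ps).
Proof.
move=> hmu hnu0 hnu1 hmn htf hpf hts hps.
move=> h1 h2 h3 h4 h5 h6 hc.
suff: mu*nu*(D - Num.min (tf + pf) (ts + ps)) <= Num.min (tf + pf) (ts + ps).
  move/(keyr hmn); set r := (mu*nu)^-1; set M := Num.min _ _.
  rewrite mulrDl mul1r; lra.
move: h1 h2 h3 h4 h5 h6.
rewrite !minEle !maxEle.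
have [hf|hf] := leP tf pf; have [hs|hs] := leP ts ps => imf ims hk1 hk2 hk3 hk4;
have [hM|hM] := leP (tf+pf) (ts+ps);
case: hc => [[-> [c1 c2]]|[-> [c1 [[c2 c3]|[c2 c3]]]]];
 nra.
Qed.

Lemma pick_minP (q0 : op n) Q : pick_min t p q0 Q \in q0 :: Q /\
  forall x, x \in q0 :: Q -> prio t p (pick_min t p q0 Q) <= prio t p x.
Proof.
elim: Q q0 => [|b Q IH] q0.
  by split; [rewrite mem_seq1 | move=> x; rewrite mem_seq1 => /eqP ->].
set a := if prio t p b < prio t p q0 then b else q0.
have -> : pick_min t p q0 (b :: Q) = pick_min t p a Q by [].
have [h1 h2] := IH a.
have ha : a \in [:: q0, b & Q] by rewrite /a; case: ifP => _; rewrite !inE eqxx ?orbT.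
have hpa : prio t p a <= prio t p q0 /\ prio t p a <= prio t p b.
  by rewrite /a; case: ifP => h; split => //; rewrite ?lexx //; [apply: ltW | rewrite leNgt h].
split.
  move: h1; rewrite inE => /orP [/eqP ->|] //; by rewrite !inE => ->; rewrite !orbT.
move=> x; rewrite !inE => /orP [/eqP ->|/orP [/eqP ->|hx]].
- exact: le_trans (h2 a (mem_head _ _)) (proj1 hpa).
- exact: le_trans (h2 a (mem_head _ _)) (proj2 hpa).
- by apply: h2; rewrite inE hx orbT.
Qed.

Lemma index_cons' (T : eqType) (x y : T) s : index x (y :: s) = if y == x then 0%N else (index x s).+1.
Proof. by []. Qed.

Definition wt (Q : seq (op n)) : nat := size Q + count (fun o : op n => o.2) Q.
Definition wf (Q : seq (op n)) : bool :=
  uniq Q && all (fun o : op n => o.2 || ((o.1, true) \notin Q)) Q.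


Lemma run_spec f (Q : seq (op n)) : wf Q -> (wt Q <= f)%N ->
 let s := run t p f Q in
 [/\ uniq s,
  forall o, (o \in s) = (o \in Q) || (~~ o.2 && ((o.1,true) \in Q)),
  forall y, (y,true) \in Q -> (index (y,true) s < index (y,false) s)%N &
  forall d u v, (u < v)%N -> (v < size s)%N ->
    (nth d s v \in Q) || (~~ (nth d s v).2 && (index ((nth d s v).1,true) s < u)%N) ->
    prio t p (nth d s u) <= prio t p (nth d s v)].
Proof.
elim: f Q => [|f IH] Q.
  case: Q => [|q Q] //= _ _; split => //.
  by move=> o; rewrite !in_nil andbF.
case: Q => [|q0 Q1].
  move=> _ _ /=; split => //.
  by move=> o; rewrite !in_nil andbF.
set Q := q0 :: Q1 => hwf hwt.
have [homem0 hmin0] := pick_minP q0 Q.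
pose o := pick_min t p q0 Q.
have hrun : run t p f.+1 Q = o :: run t p f (if o.2 then rcons (rem o Q) (o.1, false) else rem o Q) by [].
rewrite hrun; clear hrun.
rewrite -/o in homem0 hmin0.
have homem : o \in Q.
  by move: homem0; rewrite inE => /orP [/eqP ->|//]; exact: mem_head.
have hmin x : x \in Q -> prio t p o <= prio t p x.
  by move=> hx; apply: hmin0; rewrite inE hx orbT.
clear homem0 hmin0.
move: hwf => /andP [huQ hallQ].
have hQ x : x \in Q -> x.2 || ((x.1, true) \notin Q) by move=> hx; exact: (allP hallQ x hx).
have hoE : o = (o.1, o.2) by rewrite -surjective_pairing.
set Q' := rem o Q.
have hQ' x : (x \in Q') = (x != o) && (x \in Q) by rewrite (mem_rem_uniq _ huQ).
set Q'' := if o.2 then rcons Q' (o.1, false) else Q'.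
have hQ'' x : (x \in Q'') = ((x != o) && (x \in Q)) || (o.2 && (x == (o.1, false))).
  rewrite /Q''; case: ifP => ho; last by rewrite hQ' orbF.
  by rewrite mem_rcons inE hQ' orbC.
have hnotpf : o.2 -> (o.1, false) \notin Q.
  move=> ho; apply/negP => hin; have := hQ _ hin => /=.
  by rewrite -ho -hoE homem.
have hwf'' : wf Q''.
  apply/andP; split.
    rewrite /Q''; case: ifP => ho; last exact: rem_uniq.
    rewrite rcons_uniq rem_uniq // andbT hQ' negb_and.
    by rewrite (negbTE (hnotpf ho)) orbT.
  apply/allP => [[y b]] /=; rewrite hQ'' => /orP [/andP [hne hin]|/andP [ho /eqP [-> ->]]].
    have := hQ _ hin => /= /orP [-> //|hnt]; apply/orP; right.
    rewrite hQ'' negb_or negb_and hnt orbT /= negb_and.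
    by apply/orP; right; apply/eqP => -[].
  have e : (o.1, true) = o by rewrite {2}hoE ho.
  rewrite /= hQ'' negb_or xpair_eqE eqxx /= andbF andbT e eqxx.
  done.
have hsz : size Q = (size Q').+1 by rewrite size_rem.
have hwt'' : (wt Q'' <= f)%N.
  move: hwt; rewrite /wt.
  have hc : count (fun o0 : op n => o0.2) Q = (o.2 + count (fun o0 : op n => o0.2) Q')%N.
    by rewrite (permP (perm_to_rem homem)) /=.
  rewrite hc hsz /Q''; case: ifP => ho; rewrite -?cats1 ?size_cat ?count_cat /= ?ho; set c := count _ Q'; set z := size Q'; lia.
have [IHu IHm IHo IHg] := IH Q'' hwf'' hwt''.
set s' := run t p f Q'' in IHu IHm IHo IHg *.
move=> /=.
have hos' : o \notin s'.
  rewrite IHm hQ'' eqxx /= negb_or; apply/andP; split.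
    by apply/negP => /andP [ho /eqP he]; have := congr1 snd he => /= e; rewrite e in ho.
  apply/negP => /andP [ho]; rewrite hQ'' => /orP [/andP [_ hin]|/andP [_ /eqP [] /eqP]]; last by [].
  by have := hQ _ homem; rewrite (negbTE ho) /= hin.
clearbody s' Q'' Q' o.
split.
- by rewrite /= hos' IHu.
- move=> [y b]; rewrite inE IHm !hQ''.
  case: (eqVneq (y, b) o) => [e|hne].
    by rewrite -e in homem *; rewrite homem.
  rewrite /=.
  have -> : ((y, true) == (o.1, false)) = false by rewrite xpair_eqE andbF.
  rewrite andbF orbF.
  case: (eqVneq (y, true) o) => [e2|hne2].
    rewrite -e2 in homem *; rewrite homem /= xpair_eqE eqxx /=.
    by case: b {hne}; rewrite /= ?orbF ?orbT.
  rewrite /=.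
  have -> : o.2 && ((y, b) == (o.1, false)) = false.
    apply/negP => /andP [h2 /eqP [ey eb]].
    by move/eqP: hne2; apply; rewrite ey {2}hoE h2.
  by rewrite orbF.
- move=> y hy.
  case: (eqVneq o (y, true)) => [e|hne].
    by rewrite e xpair_eqE andbF.
  have hne' : o != (y, false).
    apply/eqP => e; have := hQ _ homem; rewrite e /= hy //.
  rewrite (negbTE hne').
  have hy'' : (y, true) \in Q'' by rewrite hQ'' eq_sym hne hy.
  by have := IHo y hy''.
- move=> d [|u] [|v] //= huv hv.
    rewrite ltn0 andbF orbF => hb; apply: hmin => //.
  rewrite ltnS in huv hv.
  move=> hb; apply: IHg => //.
  set b := nth d s' v in hb *.
  have hbs : b \in s' by rewrite mem_nth.
  case/orP: hb => [hbQ|/andP [hb2 hbi]].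
    rewrite hQ''; apply/orP; left; rewrite hbQ andbT.
    by apply/orP; left; apply/eqP => e; move: hos'; rewrite -e hbs.
  move: hbi; case: (eqVneq o (b.1, true)) => [e|hne] hbi.
    apply/orP; left; rewrite hQ''; apply/orP; right.
    have -> : b = (b.1, false) by rewrite [b]surjective_pairing; move: hb2; case: b.2.
    by rewrite e /= eqxx.
  by rewrite hb2 /=; apply/orP; right.
Qed.


Definition Q0 : seq (op n) := [seq (j, true) | j <- enum 'I_n].

Lemma Q0E (o : op n) : (o \in Q0) = o.2.
Proof.
case: o => y b; apply/mapP/idP => /=.
  by case=> j _ [_ ->].
by move=> hb; exists y; rewrite ?mem_enum // hb.
Qed.

Lemma sort1_spec : let S := sort1 t p in
 [/\ uniq S, forall o, o \in S,
  forall y, (index (y,true) S < index (y,false) S)%N &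
  forall d u v, (u < v)%N -> (v < size S)%N ->
    (nth d S v).2 || (index ((nth d S v).1,true) S < u)%N ->
    prio t p (nth d S u) <= prio t p (nth d S v)].
Proof.
have hwf : wf Q0.
  apply/andP; split.
    by rewrite map_inj_uniq ?enum_uniq // => a b [].
  by apply/allP => o; rewrite Q0E => ->.
have hwt : (wt Q0 <= 2 * n)%N.
  rewrite /wt /Q0 size_map size_enum_ord count_map.
  rewrite (eq_count (a2 := predT)) // count_predT size_enum_ord; lia.
have [h1 h2 h3 h4] := run_spec _ _ hwf hwt.
split => //.
- by move=> o; rewrite h2 !Q0E /=; case: o.2.
- by move=> y; apply: h3; rewrite Q0E.
- move=> d u v huv hv hb; apply: h4 => //.
  by rewrite Q0E; case: (nth d _ v).2 hb => //= ->; rewrite andbT.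
Qed.

Lemma startS d u : (u < size (sort1 t p))%N ->
  start t p u.+1 = start t p u + dur t p (nth d (sort1 t p) u).
Proof.
by move=> hu; rewrite /start (take_nth d hu) -cats1 big_cat big_seq1.
Qed.

Lemma start_le (hd : forall o, 0 <= dur t p o) u v : (u <= v)%N -> start t p u <= start t p v.
Proof.
move=> /subnKC <-; elim: (v - u)%N => [|k IH]; first by rewrite addn0.
apply: le_trans IH _; rewrite addnS.
case: (ltnP (u + k) (size (sort1 t p))) => h.
  have [d _] : exists d : op n, True by case: (sort1 t p) h => [//|x _] _; exists x.
  by rewrite (startS d _ h) lerDl.
by rewrite /start !take_oversize // (leq_trans h).
Qed.

Definition G (j : 'I_n) (o : op n) : R :=
  if (index o (sort1 t p) <= index (j, false) (sort1 t p))%N then dur t p o else 0.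

Lemma dd_E (hd : forall o, 0 <= dur t p o) k j :
  dd t p k j = G j (k, true) + G j (k, false).
Proof.
have [hu hm _ _] := sort1_spec.
set S := sort1 t p in hu hm *.
set Pj := index (j, false) S.
have hPj : (Pj < size S)%N by rewrite index_mem.
transitivity (\sum_(o <- S | o.1 == k) G j o).
  rewrite [RHS](big_nth (k, true)) big_mkord; apply: eq_bigr => i _.
  rewrite /G index_uniq //.
  have hi := ltn_ord i.
  rewrite /compl -/S -/Pj (startS (k, true) _ hi).
  case: leqP => hiP.
    rewrite min_l; last by rewrite -(startS (k, true) _ hi); apply: start_le.
    by rewrite addrAC subrr add0r max_r.
  rewrite max_l // subr_le0.
  rewrite ge_min; apply/orP; right.
  by apply: start_le.
rewrite -big_filter.
have hperm : perm_eq [seq o <- S | o.1 == k] [:: (k, true); (k, false)].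
  apply: uniq_perm; first by rewrite filter_uniq.
    by rewrite /= inE xpair_eqE andbF.
  move=> [y b]; rewrite mem_filter hm andbT !inE !xpair_eqE /=.
  by case: b; rewrite ?andbT ?andbF ?orbF.
by rewrite (perm_big _ hperm) !big_cons big_nil /= addr0.
Qed.

Lemma greedy (a b : op n) : (index a (sort1 t p) < index b (sort1 t p))%N ->
  b.2 || (index (b.1, true) (sort1 t p) < index a (sort1 t p))%N ->
  prio t p a <= prio t p b.
Proof.
have [hu hm _ h4] := sort1_spec.
move=> hab hb.
have hbs : (index b (sort1 t p) < size (sort1 t p))%N by rewrite index_mem.
have := h4 a _ _ hab hbs; rewrite !nth_index //; exact.
Qed.

Lemma index_inj (a b : op n) : index a (sort1 t p) = index b (sort1 t p) -> a = b.
Proof.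
have [hu hm _ _] := sort1_spec.
by move=> e; rewrite -(nth_index a (hm a)) e nth_index.
Qed.

Lemma DD_bound (hd : forall o, 0 <= dur t p o) (mu nu : R)
  (hmu : 1 < mu) (hnu0 : 0 < nu) (hnu1 : nu < 1) (hmunu : 1 < mu * nu)
  (ht : forall j, 0 <= t j) (hp : forall j, 0 <= p j) (f s k : 'I_n) :
  f != s ->
  imbalanced t p mu f -> imbalanced t p mu s ->
  nu * mm t p f <= t k -> t k <= mm t p f ->
  nu * mm t p s <= t k -> t k <= mm t p s ->
  (index (f, false) (sort1 t p) < index (s, false) (sort1 t p))%N ->
  DD t p f s <= (1 + (mu * nu)^-1) * Dstar t p f s.
Proof.
move=> hfs imf ims h1 h2 h3 h4 hP.
have [_ _ h3' _] := sort1_spec.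
have hTf := h3' f; have hTs := h3' s.
rewrite /DD !dd_E // /G.
set S := sort1 t p in hP hTf hTs *.
set Tf := index (f, true) S in hTf *.
set Ts := index (s, true) S in hTs *.
set Pf := index (f, false) S in hP hTf *.
set Ps := index (s, false) S in hP hTs *.
have e1 : (Tf <= Ps)%N by apply: leq_trans (ltnW hTf) (ltnW hP).
rewrite e1 (ltnW hP) (leqNgt Ps Pf) hP /=.
have hprio y b : prio t p (y, b) = if b then t y else p y by [].
rewrite /Dstar /sigma; apply: (arith (t f) (p f) (t s) (p s) (t k) mu nu _ hmu hnu0 hnu1 hmunu (ht f) (hp f) (ht s) (hp s) imf ims h1 h2 h3 h4).
case: (leqP Ts Pf) => hTP.
- right.
  have hTP' : (Ts < Pf)%N.
    rewrite ltn_neqAle hTP andbT; apply/eqP => e.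
    by move: (congr1 snd (index_inj _ _ e)).
  split; first by rewrite /dur /= addr0.
  split.
    have := greedy (f, false) (s, false) hP; rewrite /= hTP' !hprio; exact.
  have hneT : Tf != Ts by apply/eqP => /index_inj [] /eqP; rewrite (negbTE hfs).
  case: (ltngtP Ts Tf) => hT; last by rewrite hT eqxx in hneT.
  + left; split.
      by have := greedy (s, true) (f, true) hT; rewrite /= !hprio; exact.
    have hTfPs : (Tf < Ps)%N by apply: ltn_trans hTf hP.
    by have := greedy (f, true) (s, false) hTfPs; rewrite /= hT !hprio; exact.
  + right; split.
      by have := greedy (f, true) (s, true) hT; rewrite /= !hprio; exact.
    by have := greedy (s, true) (f, false) hTP'; rewrite /= hT !hprio; exact.
- left; split; first by rewrite /dur /= !addr0.
  have hTfTs : (Tf < Ts)%N by apply: ltn_trans hTf hTP.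
  split.
    by have := greedy (f, true) (s, true) hTfTs; rewrite /= !hprio; exact.
  by have := greedy (f, false) (s, true) hTP; rewrite /= !hprio; exact.
Qed.

End S.

Theorem mainTheorem8 (R : realFieldType) (n : nat) (t p : 'I_n -> R) (mu nu : R)
  (hmu : 1 < mu) (hnu0 : 0 < nu) (hnu1 : nu < 1) (hmunu : 1 < mu * nu)
  (hmunu2 : 1 + mu^-1 <= nu + nu ^+ 2)
  (ht : forall j, 0 <= t j) (hp : forall j, 0 <= p j)
  (hgp : general_position t p)
  (i j k : 'I_n) (hij : i != j) (hik : i != k) (hjk : j != k)
  (hredi : red_pair t p mu nu i k) (hredj : red_pair t p mu nu j k) :
  t k <= Dstar t p i j /\
  DD t p i j <= (1 + (mu * nu)^-1) * Dstar t p i j.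
Proof.
have hd : forall o, 0 <= dur t p o by move=> [y []]; rewrite /dur /=.
case: hredi => _ imi h1i h2i _.
case: hredj => _ imj h1j h2j _.
have hmm x : mm t p x <= sigma t p x.
  by rewrite /mm /sigma ge_max lerDl lerDr ht hp.
split.
  rewrite /Dstar le_min; apply/andP; split.
    exact: le_trans h2i (hmm i).
  exact: le_trans h2j (hmm j).
case: (ltngtP (index (i, false) (sort1 t p)) (index (j, false) (sort1 t p))) => hP.
- exact: (@DD_bound R n t p hd mu nu hmu hnu0 hnu1 hmunu ht hp i j k hij imi imj h1i h2i h1j h2j hP).
- have -> : DD t p i j = DD t p j i by rewrite /DD addrC.
  have -> : Dstar t p i j = Dstar t p j i by rewrite /Dstar minC.
  have hji : j != i by rewrite eq_sym.
  exact: (@DD_bound R n t p hd mu nu hmu hnu0 hnu1 hmunu ht hp j i k hji imj imi h1j h2j h1i h2i hP).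
- by have [] := @index_inj R n t p _ _ hP; move/eqP: hij.
Qed.
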